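(* Let $\mathbb{C}$ be a pointed category with binary products. For objects $A,B$ write $\pi_1\colon A\times B\to A$, $\pi_2\colon A\times B\to B$ for the product projections, $\iota_1=(1_A,0)\colon A\to A\times B$ and $\iota_2=(0,1_B)\colon B\to A\times B$, and for morphisms $u\colon X\to A$, $v\colon X\to B$ write $(u,v)\colon X\to A\times B$ for the induced morphism; $0$ denotes a zero morphism. The following conditions are equivalent: (a) for all objects $A,B,C$ and every morphism $f\colon A\times B\to C$: if $f\circ\iota_1=0$ then $f=f\circ\iota_2\circ\pi_2$ (equivalently, $\pi_2\colon A\times B\to B$ is a cokernel of $\iota_1\colon A\to A\times B$); (b) for all objects $X,Y$ and every morphism $f\colon X\times X\to Y$: if $f\circ\iota_1=0$ then $f=f\circ\iota_2\circ\pi_2$ (equivalently, $\pi_2\colon X\times X\to X$ is a cokernel of $\iota_1=(1_X,0)\colon X\to X\times X$); (c) for all objects $X,Y$ and every morphism $f\colon X\times X\to Y$: if $f\circ(1_X,0)=0$ then $f\circ(1_X,1_X)=f\circ(0,1_X)$; (d) for all objects $A,B,C,X$ and all morphisms $f\colon A\times B\to C$, $a\colon X\to A$, $b\colon X\to B$: if $f\circ(a,0)=0$ then $f\circ(a,b)=f\circ(0,b)$; (e) for all objects $X,Y,U$ and all morphisms $f\colon X\times X\to Y$, $x\colon U\to X$: if $f\circ(x,0)=0$ then $f\circ(x,x)=f\circ(0,x)$.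
   Context: A pointed category is one with a zero object; $0$ denotes the zero morphism between any two objects. *)

(* Defs.v *)
Set Implicit Arguments.
Unset Strict Implicit.

Record Category := {
  Ob :> Type;
  Hom : Ob -> Ob -> Type;
  idm : forall A, Hom A A;
  comp : forall A B D, Hom B D -> Hom A B -> Hom A D;
  comp_assoc : forall A B E D (f : Hom A B) (g : Hom B E) (h : Hom E D),
      comp h (comp g f) = comp (comp h g) f;
  comp_id_l : forall A B (f : Hom A B), comp (idm B) f = f;
  comp_id_r : forall A B (f : Hom A B), comp f (idm A) = f
}.

Arguments idm {c} A.
Arguments comp {c A B D} g f.
Notation "g \o f" := (comp g f) (at level 40, left associativity).

Record PointedCategory := {
  pcat :> Category;
  zero_ob : pcat;
  from_zero : forall A : pcat, Hom zero_ob A;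
  from_zero_uniq : forall (A : pcat) (f : Hom zero_ob A), f = from_zero A;
  to_zero : forall A : pcat, Hom A zero_ob;
  to_zero_uniq : forall (A : pcat) (f : Hom A zero_ob), f = to_zero A
}.

Definition zmor (C : PointedCategory) (A B : C) : Hom A B :=
  @from_zero C B \o @to_zero C A.
Arguments zmor {C} A B.

Record BinProducts (C : Category) := {
  prodo : C -> C -> C;
  pr1 : forall A B : C, Hom (prodo A B) A;
  pr2 : forall A B : C, Hom (prodo A B) B;
  pairm : forall (X A B : C), Hom X A -> Hom X B -> Hom X (prodo A B);
  pr1_pair : forall X A B (u : Hom X A) (v : Hom X B), pr1 A B \o pairm u v = u;
  pr2_pair : forall X A B (u : Hom X A) (v : Hom X B), pr2 A B \o pairm u v = v;
  pair_uniq : forall X A B (u : Hom X A) (v : Hom X B) (h : Hom X (prodo A B)),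
      pr1 A B \o h = u -> pr2 A B \o h = v -> h = pairm u v
}.
Arguments prodo {C} b A B.
Arguments pr1 {C} b A B.
Arguments pr2 {C} b A B.
Arguments pairm {C} b {X A B} u v.

Definition iota1 (C : PointedCategory) (P : BinProducts C) (A B : C)
  : Hom A (prodo P A B) := pairm P (idm A) (zmor A B).
Definition iota2 (C : PointedCategory) (P : BinProducts C) (A B : C)
  : Hom B (prodo P A B) := pairm P (zmor B A) (idm B).
Arguments iota1 {C} P A B.
Arguments iota2 {C} P A B.

Definition cond_a (C : PointedCategory) (P : BinProducts C) : Prop :=
  forall (A B D : C) (f : Hom (prodo P A B) D),
    f \o iota1 P A B = zmor A D ->
    f = f \o iota2 P A B \o pr2 P A B.

Definition cond_b (C : PointedCategory) (P : BinProducts C) : Prop :=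
  forall (X Y : C) (f : Hom (prodo P X X) Y),
    f \o iota1 P X X = zmor X Y ->
    f = f \o iota2 P X X \o pr2 P X X.

Definition cond_c (C : PointedCategory) (P : BinProducts C) : Prop :=
  forall (X Y : C) (f : Hom (prodo P X X) Y),
    f \o pairm P (idm X) (zmor X X) = zmor X Y ->
    f \o pairm P (idm X) (idm X) = f \o pairm P (zmor X X) (idm X).

Definition cond_d (C : PointedCategory) (P : BinProducts C) : Prop :=
  forall (A B D X : C) (f : Hom (prodo P A B) D) (a : Hom X A) (b : Hom X B),
    f \o pairm P a (zmor X B) = zmor X D ->
    f \o pairm P a b = f \o pairm P (zmor X A) b.

Definition cond_e (C : PointedCategory) (P : BinProducts C) : Prop :=
  forall (X Y U : C) (f : Hom (prodo P X X) Y) (x : Hom U X),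
    f \o pairm P x (zmor U X) = zmor U Y ->
    f \o pairm P x x = f \o pairm P (zmor U X) x.

(* Main.v *)
Require Import Defs.

Section H.
Variables (C : PointedCategory) (P : BinProducts C).

Lemma zl (A B D : C) (g : Hom A B) : zmor B D \o g = zmor A D.
Proof. unfold zmor. rewrite <- comp_assoc. f_equal. apply to_zero_uniq. Qed.

Lemma zr (A B D : C) (h : Hom B D) : h \o zmor A B = zmor A D.
Proof. unfold zmor. rewrite comp_assoc. f_equal. apply from_zero_uniq. Qed.

Lemma pair_comp (Y X A B : C) (u : Hom X A) (v : Hom X B) (h : Hom Y X) :
  pairm P u v \o h = pairm P (u \o h) (v \o h).
Proof.
  apply pair_uniq; rewrite comp_assoc; [rewrite pr1_pair | rewrite pr2_pair]; reflexivity.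
Qed.

Lemma a_d : cond_a P -> cond_d P.
Proof.
  intros Ha A B D X f a b H.
  set (g := f \o pairm P (a \o pr1 P X B) (pr2 P X B)).
  assert (Hg : g \o iota1 P X B = zmor X D).
  { unfold g, iota1. rewrite <- comp_assoc, pair_comp, <- comp_assoc, !pr1_pair, pr2_pair,
      comp_id_r. exact H. }
  pose proof (Ha _ _ _ g Hg) as E.
  assert (E1 : f \o pairm P a b = g \o pairm P (idm X) b).
  { unfold g. rewrite <- comp_assoc, pair_comp, <- comp_assoc, pr1_pair, pr2_pair, comp_id_r.
    reflexivity. }
  rewrite E1, E. rewrite <- !comp_assoc, pr2_pair. unfold g, iota2.
  rewrite (pair_comp _ _ _ _ (zmor B X)), comp_id_l, zl, <- comp_assoc, pair_comp, <- comp_assoc, pr1_pair, pr2_pair, zr.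
  reflexivity.
Qed.

Lemma d_e : cond_d P -> cond_e P.
Proof. intros Hd X Y U f x H. apply Hd; exact H. Qed.

Lemma e_c : cond_e P -> cond_c P.
Proof. intros He X Y f H. apply He; exact H. Qed.

Lemma a_b : cond_a P -> cond_b P.
Proof. intros Ha X Y f H. apply Ha; exact H. Qed.

Lemma b_c : cond_b P -> cond_c P.
Proof.
  intros Hb X Y f H.
  transitivity (f \o iota2 P X X \o pr2 P X X \o pairm P (idm X) (idm X)).
  { f_equal. exact (Hb _ _ f H). }
  rewrite <- comp_assoc, pr2_pair, comp_id_r. reflexivity.
Qed.

Lemma c_a : cond_c P -> cond_a P.
Proof.
  intros Hc A B D f H.
  set (g := f \o pairm P (pr1 P A B \o pr1 P (prodo P A B) (prodo P A B)) (pr2 P A B \o pr2 P (prodo P A B) (prodo P A B))).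
  assert (H1 : g \o pairm P (idm (prodo P A B)) (zmor (prodo P A B) (prodo P A B)) = zmor (prodo P A B) D).
  { unfold g. rewrite <- comp_assoc, pair_comp, <- !comp_assoc, pr1_pair, pr2_pair,
      comp_id_r, zr.
    assert (E : pairm P (pr1 P A B) (zmor (prodo P A B) B) = iota1 P A B \o pr1 P A B).
    { unfold iota1. rewrite pair_comp, comp_id_l, zl. reflexivity. }
    rewrite E, comp_assoc, H, zl. reflexivity. }
  pose proof (Hc _ _ g H1) as E.
  unfold g in E. rewrite <- !comp_assoc, !pair_comp, <- !comp_assoc, !pr1_pair, !pr2_pair,
    !comp_id_r, zr in E.
  assert (I : pairm P (pr1 P A B) (pr2 P A B) = idm (prodo P A B)).
  { symmetry. apply pair_uniq; apply comp_id_r. }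
  rewrite I, comp_id_r in E. etransitivity; [exact E|].
  unfold iota2. rewrite <- comp_assoc, pair_comp, comp_id_l, zl. reflexivity.
Qed.

End H.

Theorem theorem1p2 (C : PointedCategory) (P : BinProducts C) :
  (cond_a P <-> cond_b P) /\ (cond_a P <-> cond_c P) /\
  (cond_a P <-> cond_d P) /\ (cond_a P <-> cond_e P).
Proof.
  pose proof (@a_d C P). pose proof (@d_e C P). pose proof (@e_c C P).
  pose proof (@a_b C P). pose proof (@b_c C P). pose proof (@c_a C P).
  tauto.
Qed.
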